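(* Let $G$ be a circle of circumference $1$ and let $\mathbf{x}\in G^n$ be such that the agents are not on one semicircle. Then for every $i\in N$, $\mathrm{cost}(\mathrm{rc}(\mathbf{x}),x_i)\le\frac14$.
   Context: $d(x,y)$ is the length of the shorter arc between $x,y$; $\hat{x}$ is the antipodal point of $x$. $\mathrm{cost}(P,x_i)=\mathbb{E}_{y\sim P}[d(x_i,y)]$. Agents are on one semicircle if all locations lie in some closed arc of length $1/2$. RC (Random Center) mechanism: the antipodal points $\hat{x}_1,\dots,\hat{x}_n$ partition $G$ into arcs between cyclically consecutive antipodal points; $\mathrm{rc}(\mathbf{x})$ returns the midpoint of each such arc with probability equal to its length (equivalently: pick $y$ uniformly on $G$ and return the midpoint of the arc containing $y$). *)

(* Defs.v *)
From Stdlib Require Import Reals Lra List.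
Import ListNotations.
Open Scope R_scope.

(* The circle G of circumference 1 is R/Z; a point is represented by any real,
   two reals denoting the same point iff their difference is an integer. *)

Definition cwpos (x y : R) : R := frac_part (y - x).

Definition cdist (x y : R) : R := Rmin (frac_part (x - y)) (1 - frac_part (x - y)).

Definition antipode (x : R) : R := x + / 2.

Definition on_one_semicircle (n : nat) (x : nat -> R) : Prop :=
  exists c : R, forall i, (i < n)%nat -> cwpos c (x i) <= / 2.

Definition cwgap (a b : R) : R :=
  if Req_EM_T (cwpos a b) 0 then 1 else cwpos a b.

(* length of the arc starting at the antipode of x_j and ending at the
   cyclically next antipodal point (full circle if there is no other one) *)
Definition next_gap (n : nat) (x : nat -> R) (j : nat) : R :=
  fold_right Rmin 1
    (map (fun k => cwgap (antipode (x j)) (antipode (x k))) (seq 0 n)).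

(* j is the first index at its location (so each arc is counted once) *)
Definition first_occ (x : nat -> R) (j : nat) : bool :=
  negb (existsb (fun k => if Req_EM_T (cwpos (x j) (x k)) 0 then true else false)
                (seq 0 j)).

(* cost(rc(x), z): expected distance to z of the RC lottery, which returns the
   midpoint of each arc between cyclically consecutive antipodal points with
   probability equal to the arc's length. *)
Definition rc_cost (n : nat) (x : nat -> R) (z : R) : R :=
  fold_right Rplus 0
    (map (fun j =>
            if first_occ x j then
              next_gap n x j * cdist (antipode (x j) + next_gap n x j / 2) z
            else 0)
         (seq 0 n)).

(* Main.v *)
Require Import Defs.
From Stdlib Require Import Reals Lra Lia List.
Import ListNotations.
Open Scope R_scope.

Lemma frac_eq (r : R) (z : Z) : 0 <= r - IZR z < 1 -> frac_part r = r - IZR z.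
Proof.
  intros H. unfold frac_part, Int_part.
  assert (E : (z + 1)%Z = up r).
  { apply tech_up; rewrite plus_IZR; simpl; lra. }
  rewrite <- E. rewrite minus_IZR, plus_IZR. simpl. ring.
Qed.

Lemma frac_decomp (r : R) : r = frac_part r + IZR (Int_part r).
Proof. unfold frac_part. ring. Qed.

Definition sumR (f : nat -> R) (l : list nat) := fold_right Rplus 0 (map f l).

Definition F (t : R) := (t - /2) * Rabs (t - /2) / 2.

Lemma F_mono u v : u <= v -> F u <= F v.
Proof.
  intros H. unfold F.
  destruct (Rle_dec 0 (u - /2)); destruct (Rle_dec 0 (v - /2)).
  - rewrite !Rabs_pos_eq by lra. nra.
  - lra.
  - rewrite Rabs_left by lra. rewrite Rabs_pos_eq by lra. nra.
  - rewrite !Rabs_left by lra. nra.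
Qed.

Lemma term_le a g : 0 <= g -> g * Rabs (a + g / 2 - /2) <= F (a + g) - F a.
Proof.
  intros Hg. unfold F.
  destruct (Rle_dec 0 (a - /2)).
  - rewrite !Rabs_pos_eq by lra. nra.
  - destruct (Rle_dec 0 (a + g - /2)).
    + rewrite (Rabs_left (a - /2)) by lra. rewrite (Rabs_pos_eq (a + g - /2)) by lra.
      destruct (Rle_dec 0 (a + g/2 - /2)).
      * rewrite Rabs_pos_eq by lra.
        pose proof (Rle_0_sqr (a - /2)); pose proof (Rle_0_sqr (a + g - /2)); unfold Rsqr in *. nra.
      * rewrite Rabs_left by lra.
        replace (a + g / 2 - /2) with (((a - /2) + (a + g - /2))/2) by field.
        replace g with ((a + g - /2) - (a - /2)) at 1 by ring.
        set (u := a - /2) in *. set (v := a + g - /2) in *.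
        pose proof (Rle_0_sqr u); pose proof (Rle_0_sqr v); unfold Rsqr in *. nra.
    + rewrite !Rabs_left by lra. nra.
Qed.

Lemma sum_split (f : nat -> R) (p : nat -> bool) l :
  sumR f l = sumR f (filter p l) + sumR f (filter (fun q => negb (p q)) l).
Proof.
  unfold sumR; induction l as [|h t IH]; simpl; [lra|].
  destruct (p h); simpl; rewrite IH; ring.
Qed.

Lemma intervals (a g : nat -> R) (N : nat) : forall l L U,
  (length l <= N)%nat -> NoDup l -> L <= U ->
  (forall j, In j l -> L <= a j /\ a j + g j <= U /\ 0 <= g j) ->
  (forall j k, In j l -> In k l -> j <> k -> a j <> a k) ->
  (forall j k, In j l -> In k l -> a j < a k -> a j + g j <= a k) ->
  sumR (fun j => F (a j + g j) - F (a j)) l <= F U - F L.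
Proof.
  induction N as [|N IH]; intros l L U Hlen Hnd HLU Hb Hd Hs.
  - destruct l; simpl in Hlen; [|lia]. unfold sumR; simpl.
    pose proof (F_mono _ _ HLU); lra.
  - destruct l as [|h t].
    + unfold sumR; simpl. pose proof (F_mono _ _ HLU); lra.
    + simpl in Hlen. inversion Hnd as [|h' t' Hnin Hnd']; subst.
      set (p := fun q => if Rlt_dec (a q) (a h) then true else false).
      assert (Hh := Hb h (or_introl eq_refl)).
      change (sumR (fun j => F (a j + g j) - F (a j)) (h :: t)) with
        ((F (a h + g h) - F (a h)) + sumR (fun j => F (a j + g j) - F (a j)) t).
      rewrite (sum_split _ p t).
      assert (H1 : sumR (fun j => F (a j + g j) - F (a j)) (filter p t) <= F (a h) - F L).
      { apply IH.
        - pose proof (filter_length_le p t); lia.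
        - apply NoDup_filter; auto.
        - lra.
        - intros j Hj. apply filter_In in Hj as [Hj Hp].
          unfold p in Hp. destruct (Rlt_dec (a j) (a h)); [|discriminate].
          destruct (Hb j (or_intror Hj)) as (? & ? & ?).
          pose proof (Hs j h (or_intror Hj) (or_introl eq_refl) r). lra.
        - intros j k Hj Hk. apply filter_In in Hj as [Hj _]. apply filter_In in Hk as [Hk _].
          apply Hd; right; auto.
        - intros j k Hj Hk. apply filter_In in Hj as [Hj _]. apply filter_In in Hk as [Hk _].
          apply Hs; right; auto. }
      assert (H2 : sumR (fun j => F (a j + g j) - F (a j)) (filter (fun q => negb (p q)) t)
                   <= F U - F (a h + g h)).
      { apply IH.
        - pose proof (filter_length_le (fun q => negb (p q)) t); lia.
        - apply NoDup_filter; auto.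
        - lra.
        - intros j Hj. apply filter_In in Hj as [Hj Hp].
          unfold p in Hp. destruct (Rlt_dec (a j) (a h)); [discriminate|].
          destruct (Hb j (or_intror Hj)) as (? & ? & ?).
          assert (a j <> a h).
          { apply Hd; [right; auto | left; auto |]. intro; subst; contradiction. }
          pose proof (Hs h j (or_introl eq_refl) (or_intror Hj)). lra.
        - intros j k Hj Hk. apply filter_In in Hj as [Hj _]. apply filter_In in Hk as [Hk _].
          apply Hd; right; auto.
        - intros j k Hj Hk. apply filter_In in Hj as [Hj _]. apply filter_In in Hk as [Hk _].
          apply Hs; right; auto. }
      lra.
Qed.

Section Circ.
Variable (n : nat) (x : nat -> R) (i : nat).
Let a j := frac_part (x j - x i).
Let g j := next_gap n x j.

Lemma a_bounds j : 0 <= a j < 1.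
Proof. unfold a. pose proof (base_fp (x j - x i)); lra. Qed.

Lemma diff_decomp j k : x k - x j = a k - a j + IZR (Int_part (x k - x i) - Int_part (x j - x i)).
Proof.
  unfold a. rewrite minus_IZR.
  pose proof (frac_decomp (x k - x i)); pose proof (frac_decomp (x j - x i)). lra.
Qed.

Lemma fr_gt j k : a j < a k -> frac_part (x k - x j) = a k - a j.
Proof.
  intro H. rewrite diff_decomp. rewrite frac_eq with (z := (Int_part (x k - x i) - Int_part (x j - x i))%Z).
  - ring.
  - pose proof (a_bounds j); pose proof (a_bounds k). lra.
Qed.

Lemma fr_lt j k : a k < a j -> frac_part (x k - x j) = a k - a j + 1.
Proof.
  intro H. rewrite diff_decomp. rewrite frac_eq with (z := (Int_part (x k - x i) - Int_part (x j - x i) - 1)%Z).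
  - rewrite !minus_IZR. simpl. lra.
  - pose proof (a_bounds j); pose proof (a_bounds k). rewrite !minus_IZR. simpl. split; lra.
Qed.

Lemma fr_eq j k : a k = a j -> frac_part (x k - x j) = 0.
Proof.
  intro H. rewrite diff_decomp. rewrite frac_eq with (z := (Int_part (x k - x i) - Int_part (x j - x i))%Z).
  - lra.
  - lra.
Qed.

Lemma cwpos_anti j k : cwpos (antipode (x j)) (antipode (x k)) = frac_part (x k - x j).
Proof. unfold cwpos, antipode. f_equal. ring. Qed.

Lemma cwgap_pos u v : 0 < cwgap u v.
Proof.
  unfold cwgap. destruct (Req_EM_T (cwpos u v) 0); [lra|].
  unfold cwpos in *. pose proof (base_fp (v - u)); lra.
Qed.

Lemma fold_min_le (f : nat -> R) l k : In k l -> fold_right Rmin 1 (map f l) <= f k.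
Proof.
  induction l as [|h t IH]; simpl; [tauto|]. intros [->|Hk].
  - apply Rmin_l.
  - eapply Rle_trans; [apply Rmin_r| auto].
Qed.

Lemma fold_min_le1 (f : nat -> R) l : fold_right Rmin 1 (map f l) <= 1.
Proof.
  induction l as [|h t IH]; simpl; [lra|]. eapply Rle_trans; [apply Rmin_r| auto].
Qed.

Lemma fold_min_pos (f : nat -> R) l : (forall k, 0 < f k) -> 0 < fold_right Rmin 1 (map f l).
Proof.
  intro H. induction l as [|h t IH]; simpl; [lra|]. apply Rmin_glb_lt; auto.
Qed.

Lemma g_pos j : 0 < g j.
Proof. unfold g, next_gap. apply fold_min_pos. intro; apply cwgap_pos. Qed.

Lemma g_le j k : (k < n)%nat -> frac_part (x k - x j) <> 0 -> g j <= frac_part (x k - x j).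
Proof.
  intros Hk Hne. unfold g, next_gap.
  eapply Rle_trans; [apply (fold_min_le _ _ k)|].
  - apply in_seq; lia.
  - unfold cwgap. rewrite cwpos_anti. destruct (Req_EM_T (frac_part (x k - x j)) 0); [contradiction|lra].
Qed.

Lemma gap_sep j k : (k < n)%nat -> a j < a k -> a j + g j <= a k.
Proof.
  intros Hk H. pose proof (g_le j k Hk). rewrite fr_gt in H0 by auto. specialize (H0 ltac:(lra)). lra.
Qed.

Lemma a_i : a i = 0.
Proof. unfold a. replace (x i - x i) with (0 - IZR 0) by (simpl; ring). rewrite (frac_eq _ 0); simpl; lra. Qed.

Lemma gap_end j : (i < n)%nat -> a j + g j <= 1.
Proof.
  intro Hi. destruct (Req_dec (a j) 0) as [E|E].
  - rewrite E. pose proof (fold_min_le1 (fun k => cwgap (antipode (x j)) (antipode (x k))) (seq 0 n)).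
    unfold g, next_gap. lra.
  - pose proof (a_bounds j). assert (Hl : a i < a j) by (rewrite a_i; lra).
    pose proof (g_le j i Hi). rewrite fr_lt in H0 by auto. rewrite a_i in H0.
    specialize (H0 ltac:(lra)). lra.
Qed.

Lemma first_occ_sep j k : (j < k)%nat -> first_occ x k = true -> a j <> a k.
Proof.
  intros Hjk Hf E. unfold first_occ in Hf.
  assert (existsb (fun k0 => if Req_EM_T (cwpos (x k) (x k0)) 0 then true else false) (seq 0 k) = true).
  { apply existsb_exists. exists j. split; [apply in_seq; lia|].
    destruct (Req_EM_T (cwpos (x k) (x j)) 0) as [|N]; auto. exfalso; apply N.
    unfold cwpos. apply fr_eq. auto. }
  rewrite H in Hf. discriminate.
Qed.

Lemma term_eq j : (i < n)%nat ->
  cdist (antipode (x j) + g j / 2) (x i) = Rabs (a j + g j / 2 - /2).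
Proof.
  intro Hi. pose proof (a_bounds j). pose proof (g_pos j). pose proof (gap_end j Hi).
  unfold cdist, antipode.
  assert (D : x j + / 2 + g j / 2 - x i = (a j + g j / 2 + /2) + IZR (Int_part (x j - x i))).
  { unfold a. pose proof (frac_decomp (x j - x i)). lra. }
  rewrite D.
  destruct (Rlt_dec (a j + g j / 2) (/2)).
  - rewrite frac_eq with (z := Int_part (x j - x i)) by lra.
    rewrite Rabs_left by lra. rewrite Rmin_right by lra. lra.
  - rewrite frac_eq with (z := (Int_part (x j - x i) + 1)%Z) by (rewrite plus_IZR; simpl; lra).
    rewrite plus_IZR. simpl.
    rewrite Rabs_pos_eq by lra. rewrite Rmin_left by lra. lra.
Qed.

End Circ.

Lemma sum_le_filter (T h : nat -> R) (p : nat -> bool) l :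
  (forall j, In j l -> p j = true -> T j <= h j) ->
  fold_right Rplus 0 (map (fun j => if p j then T j else 0) l) <= sumR h (filter p l).
Proof.
  unfold sumR. induction l as [|q t IH]; simpl; intros H; [lra|].
  destruct (p q) eqn:E; simpl.
  - pose proof (H q (or_introl eq_refl) E). pose proof (IH (fun j Hj => H j (or_intror Hj))). lra.
  - pose proof (IH (fun j Hj => H j (or_intror Hj))). lra.
Qed.

Theorem mainTheorem13 (n : nat) (x : nat -> R) :
  ~ on_one_semicircle n x ->
  forall i : nat, (i < n)%nat -> rc_cost n x (x i) <= / 4.
Proof.
  intros _ i Hi. unfold rc_cost.
  set (a := fun j => frac_part (x j - x i)).
  set (g := fun j => next_gap n x j).
  eapply Rle_trans.
  { apply (sum_le_filter _ (fun j => F (a j + g j) - F (a j))).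
    intros j Hj Hf. unfold g, a. rewrite (term_eq n x i j Hi).
    apply term_le. pose proof (g_pos n x j). unfold g; lra. }
  replace (/4) with (F 1 - F 0).
  2:{ unfold F. rewrite Rabs_pos_eq by lra. rewrite Rabs_left by lra. field. }
  apply (intervals a g (length (filter (first_occ x) (seq 0 n)))).
  - lia.
  - apply NoDup_filter, seq_NoDup.
  - lra.
  - intros j Hj. apply filter_In in Hj as [Hj _].
    pose proof (a_bounds x i j). pose proof (g_pos n x j). pose proof (gap_end n x i j Hi).
    unfold a, g; lra.
  - intros j k Hj Hk Hne. apply filter_In in Hj as [Hj Hfj]. apply filter_In in Hk as [Hk Hfk].
    destruct (Nat.lt_gt_cases j k) as [[Hlt|Hlt] _]; [lia| |].
    + apply (first_occ_sep x i j k Hlt Hfk).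
    + intro E. apply (first_occ_sep x i k j Hlt Hfj). auto.
  - intros j k Hj Hk Hlt. apply filter_In in Hk as [Hk _]. apply in_seq in Hk.
    apply (gap_sep n x i j k); [lia | auto].
Qed.
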